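(* Let $V$ be a finite-dimensional vector space over $\mathbb{Q}$, let $h\in GL(V)$ and let $h=h_sh_u$ be its Chevalley (Jordan) decomposition, with $h_s$ semisimple, $h_u$ unipotent and $h_sh_u=h_uh_s$. Then $\mathrm{ht}(h)=\mathrm{ht}(h_s)$.
   Context: A lattice of $V$ is a finitely generated subgroup containing a basis of $V$. For $h\in GL(V)$, $\mathrm{ht}(h)$ is the minimum of $[\Lambda:E]$ over all pairs of lattices $E\subset\Lambda$ of $V$ with $h(E)\subset\Lambda$. *)

(* Defs.v *)
From HB Require Import structures.
From mathcomp Require Import all_boot all_order all_algebra all_field.
Set Implicit Arguments. Unset Strict Implicit. Unset Printing Implicit Defensive.
Import Order.TTheory GRing.Theory Num.Theory.
Local Open Scope ring_scope.

(* V = Q^n realised as row vectors 'rV[rat]_n; a linear map h acts by v |-> v *m h. *)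

Definition vset (n : nat) := 'rV[rat]_n -> Prop.

Definition zspan (n : nat) (gs : seq 'rV[rat]_n) : vset n :=
  fun v => exists c : 'I_(size gs) -> int,
    v = \sum_(i < size gs) (gs`_i) *~ c i.

Definition lattice (n : nat) (L : vset n) : Prop :=
  (exists gs : seq 'rV[rat]_n, forall v, L v <-> zspan gs v) /\
  (exists B : 'M[rat]_n, B \in unitmx /\ forall i, L (row i B)).

Definition has_index (n : nat) (L E : vset n) (k : nat) : Prop :=
  exists r : 'I_k -> 'rV[rat]_n,
    (forall i, L (r i)) /\
    (forall i j, E (r i - r j) -> i = j) /\
    (forall x, L x -> exists i, E (x - r i)).

Definition admissible_index (n : nat) (h : 'M[rat]_n) (k : nat) : Prop :=
  exists L E : vset n, lattice L /\ lattice E /\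
    (forall v, E v -> L v) /\ (forall v, E v -> L (v *m h)) /\
    has_index L E k.

Definition is_ht (n : nat) (h : 'M[rat]_n) (k : nat) : Prop :=
  admissible_index h k /\ forall k', admissible_index h k' -> (k <= k')%N.

Definition semisimple (n : nat) (A : 'M[rat]_n) : Prop :=
  diagonalizable (map_mx (ratr : rat -> algC) A).

Definition unipotent (n : nat) (A : 'M[rat]_n) : Prop :=
  exists k : nat, iter k (mulmx (A - 1%:M)) (1%:M : 'M[rat]_n) = 0.

(* Main.v *)
Require Import Defs.
From HB Require Import structures.
From mathcomp Require Import all_boot all_order all_algebra all_field.
From Stdlib Require Import ClassicalEpsilon.
Set Implicit Arguments. Unset Strict Implicit. Unset Printing Implicit Defensive.
Import Order.TTheory GRing.Theory Num.Theory.
Local Open Scope ring_scope.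

Definition pb (P : Prop) : bool :=
  if excluded_middle_informative P then true else false.
Lemma pbP (P : Prop) : reflect P (pb P).
Proof. rewrite /pb; case: excluded_middle_informative => H; by constructor. Qed.

Definition xpick {A : Type} (a0 : A) (P : A -> Prop) : A :=
  match excluded_middle_informative (exists x, P x) with
  | left H => proj1_sig (constructive_indefinite_description P H)
  | right _ => a0 end.
Lemma xpickP {A : Type} (a0 : A) (P : A -> Prop) : (exists x, P x) -> P (xpick a0 P).
Proof.
rewrite /xpick; case: excluded_middle_informative => H // _.
exact: proj2_sig (constructive_indefinite_description P H).
Qed.

Section Grp.
Variable n : nat.
Local Notation V := 'rV[rat]_n.

Definition grp (P : vset n) := P 0 /\ (forall x y, P x -> P y -> P (x - y)).

Variable P : vset n.
Hypothesis gP : grp P.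
Lemma grp0 : P 0. Proof. by case: gP. Qed.
Lemma grpB x y : P x -> P y -> P (x - y). Proof. by case: gP => _; apply. Qed.
Lemma grpN x : P x -> P (- x).
Proof. by move=> Px; rewrite -sub0r; apply: grpB => //; apply: grp0. Qed.
Lemma grpD x y : P x -> P y -> P (x + y).
Proof. by move=> Px Py; rewrite -[y]opprK; apply: grpB => //; apply: grpN. Qed.
Lemma grpMn x m : P x -> P (x *+ m).
Proof. move=> Px; elim: m => [|m IH]; first by rewrite mulr0n; apply: grp0. by rewrite mulrS; apply: grpD. Qed.
Lemma grpMz x z : P x -> P (x *~ z).
Proof. move=> Px; case: z => m; first exact: grpMn.
by rewrite NegzE mulrNz; apply: grpN; exact: grpMn. Qed.
Lemma grp_sum (I : finType) (F : I -> V) : (forall i, P (F i)) -> P (\sum_i F i).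
Proof. move=> HF; apply: (big_ind P) => //; [exact: grp0 | exact: grpD]. Qed.
End Grp.

Lemma zspan_grp n (gs : seq 'rV[rat]_n) : grp (zspan gs).
Proof.
split.
  by exists (fun _ => 0); rewrite big1 // => i _; rewrite mulr0z.
move=> x y [c ->] [c' ->]; exists (fun i => c i - c' i).
by rewrite -sumrB; apply: eq_bigr => i _; rewrite mulrzBr.
Qed.

Lemma zspan_min n (gs : seq 'rV[rat]_n) (P : vset n) :
  grp P -> (forall g, g \in gs -> P g) -> forall v, zspan gs v -> P v.
Proof.
move=> gP Hg v [c ->]; apply: grp_sum => // i; apply: grpMz => //.
by apply: Hg; apply: mem_nth.
Qed.

Lemma zspan_mem n (gs : seq 'rV[rat]_n) g : g \in gs -> zspan gs g.
Proof.
move=> gin; have [i H ->] : exists2 i : nat, (i < size gs)%N & g = gs`_i.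
  by exists (index g gs); [rewrite index_mem | rewrite nth_index].
exists (fun j : 'I_(size gs) => ((val j == i) : nat)%:Z).
rewrite (bigD1 (Ordinal H)) //= eqxx mulr1z big1 ?addr0 // => j /negbTE.
by rewrite -val_eqE /= => ->; rewrite mulr0z.
Qed.

Lemma lattice_grp n (L : vset n) : lattice L -> grp L.
Proof.
case=> [[gs Hgs] _]; have [g0 gB] := zspan_grp gs.
by split; [apply/Hgs | move=> x y /Hgs Hx /Hgs Hy; apply/Hgs; apply: gB].
Qed.

Lemma mulmxMnl n m p (A : 'M[rat]_(m, n)) (B : 'M[rat]_(n, p)) d :
  (A *+ d) *m B = (A *m B) *+ d.
Proof. elim: d => [|d IH]; first by rewrite !mulr0n mul0mx. by rewrite !mulrS mulmxDl IH. Qed.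

Lemma lat_mult n (L : vset n) : lattice L ->
  forall w, exists c : nat, (0 < c)%N /\ L (w *+ c).
Proof.
move=> latL; have gL := lattice_grp latL.
case: latL => _ [Bm [uB HB]] w.
pose D (w : 'rV[rat]_n) := exists c : nat, (0 < c)%N /\ L (w *+ c).
have D0 : D 0 by exists 1%N; split => //; rewrite mulr1n; apply: grp0.
have DD : forall x y, D x -> D y -> D (x + y).
  move=> x y [c1 [c1p Hx]] [c2 [c2p Hy]]; exists (c1 * c2)%N; split; first by rewrite muln_gt0 c1p.
  rewrite mulrnDl; apply: grpD => //.
    by rewrite mulrnA; apply: grpMn.
  by rewrite mulnC mulrnA; apply: grpMn.
have Dt : forall (q : rat) j, D (q *: row j Bm).
  move=> q j; exists `|denq q|%N; split; first by rewrite absz_gt0 gt_eqF ?denq_gt0.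
  have e : ((`|denq q|%N)%:Z) = denq q by rewrite gez0_abs // ltW // denq_gt0.
  rewrite scalerMnl pmulrn e -mulrzr -numqE scaler_int; apply: grpMz => //.
have -> : w = (w *m invmx Bm) *m Bm by rewrite mulmxKV.
rewrite mulmx_sum_row.
by apply: (big_ind D) => // j _; apply: Dt.
Qed.

Lemma lat_mult_seq n (L : vset n) : lattice L -> forall s : seq 'rV[rat]_n,
  exists d : nat, (0 < d)%N /\ forall w, w \in s -> L (w *+ d).
Proof.
move=> latL; have gL := lattice_grp latL.
elim=> [|x s [d [dp IH]]]; first by exists 1%N.
have [c [cp Hc]] := lat_mult latL x.
exists (c * d)%N; split; first by rewrite muln_gt0 cp.
move=> w; rewrite inE => /orP [/eqP -> | ws].
  by rewrite mulrnA; apply: grpMn.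
by rewrite mulnC mulrnA; apply: grpMn => //; apply: IH.
Qed.

Lemma lat_mult_map n (L E : vset n) (B : 'M[rat]_n) : lattice L -> lattice E ->
  exists d : nat, (0 < d)%N /\ forall y, E y -> L ((y *m B) *+ d).
Proof.
move=> latL latE; have gL := lattice_grp latL.
case: (latE) => [[gs Hgs]] _.
have [d [dp Hd]] := lat_mult_seq latL [seq g *m B | g <- gs].
exists d; split => // y /Hgs; apply: (@zspan_min _ gs (fun y => L ((y *m B) *+ d))).
  split; first by rewrite mul0mx mul0rn; apply: grp0.
  by move=> x z Hx Hz; rewrite mulmxBl mulrnBl; apply: grpB.
by move=> g gin; apply: Hd; apply: map_f.
Qed.

Definition sand n (E K : vset n) (t : nat) : vset n :=
  fun v => exists x y, E x /\ K x /\ E y /\ v = x + y *+ t.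

Lemma sand_grp n (E K : vset n) t : grp E -> grp K -> grp (sand E K t).
Proof.
move=> gE gK; split.
  exists 0, 0; split; [exact: grp0|split; [exact: grp0|split; [exact: grp0|]]].
  by rewrite mul0rn addr0.
move=> _ _ [x [y [Ex [Kx [Ey ->]]]]] [x' [y' [Ex' [Kx' [Ey' ->]]]]].
exists (x - x'), (y - y'); split; first exact: grpB.
split; first exact: grpB. split; first exact: grpB.
by rewrite mulrnBl opprD addrACA.
Qed.

Lemma sand_in n (E K : vset n) t x y : E x -> K x -> E y -> sand E K t (x + y *+ t).
Proof. by move=> Ex Kx Ey; exists x, y. Qed.

Lemma mulrzMn_swap n (g : 'rV[rat]_n) (c : int) (t : nat) : (g *~ c) *+ t = (g *+ t) *~ c.
Proof. by rewrite !pmulrn -!mulrzA mulrC. Qed.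

Lemma sand_lattice n (E K : vset n) t : lattice E -> grp K -> (0 < t)%N ->
  lattice (sand E K t).
Proof.
move=> latE gK tp; have gE := lattice_grp latE.
have gS := sand_grp t gE gK.
set S := sand E K t in gS *.
case: (latE) => [[gs Hgs]] [Bm [uB HB]].
have E0 : E 0 by apply: grp0.
have K0 : K 0 by apply: grp0.
have Egs : forall i : 'I_(size gs), E gs`_i.
  by move=> i; apply/Hgs; apply: zspan_mem; apply: mem_nth.
have Sgs : forall i : 'I_(size gs), S (gs`_i *+ t).
  by move=> i; rewrite -[_ *+ t]add0r; apply: sand_in.
split; last first.
  exists (t%:R *: Bm); split.
    by rewrite unitmxZ // unitfE pnatr_eq0 -lt0n.
  move=> i; have -> : row i (t%:R *: Bm) = row i Bm *+ t.
    by rewrite -scaler_nat; apply/rowP => j; rewrite !mxE.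
  by rewrite -[_ *+ t]add0r; apply: sand_in.
pose m := size gs.
pose F (f : {ffun 'I_m -> 'I_t}) :=
  let v := \sum_(i < m) gs`_i *+ f i in if pb (S v) then v else 0.
pose gs' := [seq g *+ t | g <- gs] ++ [seq F f | f <- enum {ffun 'I_m -> 'I_t}].
exists gs' => v; split; last first.
  apply: zspan_min => // g; rewrite mem_cat => /orP [/mapP [g0 g0in ->] | /mapP [f _ ->]].
    by rewrite -[_ *+ t]add0r; apply: sand_in => //; apply/Hgs; apply: zspan_mem.
  by rewrite /F /=; case: pbP => // _; apply: grp0.
move=> [x [y [Ex [Kx [Ey ->]]]]].
have [c Hc] := (Hgs x).1 Ex.
have [c' Hc'] := (Hgs y).1 Ey.
have gZ := zspan_grp gs'.
have tz : (0 < t%:Z) by rewrite ltz_nat.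
have tnz : (t%:Z != 0) by rewrite gt_eqF.
pose q i := ((c i) %/ t%:Z)%Z.
have Hr : forall i, (`|((c i) %% t%:Z)%Z|%N < t)%N.
  by move=> i; rewrite -ltz_nat gez0_abs ?modz_ge0 // ltz_pmod.
pose f := [ffun i => Ordinal (Hr i)].
pose vf := \sum_(i < m) gs`_i *+ `|((c i) %% t%:Z)%Z|%N.
have ex : x = \sum_(i < m) (gs`_i *+ t) *~ q i + vf.
  rewrite Hc -big_split; apply: eq_bigr => i _ /=.
  rewrite {1}(divz_eq (c i) t%:Z) mulrzDr pmulrn -mulrzA mulrC.
  by rewrite [gs`_i *+ _]pmulrn gez0_abs // modz_ge0.
have Gt : forall i : 'I_m, zspan gs' (gs`_i *+ t).
  move=> i; apply: zspan_mem; rewrite mem_cat; apply/orP; left.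
  by apply: map_f; apply: mem_nth.
have Svf : S vf.
  have -> : vf = x - \sum_(i < m) (gs`_i *+ t) *~ q i by rewrite ex addrC addKr.
  apply: grpB => //; first by rewrite -[x]addr0 -(mul0rn _ t); apply: sand_in.
  by apply: grp_sum => // i; apply: grpMz.
have Gvf : zspan gs' vf.
  apply: zspan_mem; rewrite mem_cat; apply/orP; right.
  apply/mapP; exists f; first by rewrite mem_enum.
  rewrite /F /=.
  have -> : \sum_(i < m) gs`_i *+ f i = vf by apply: eq_bigr => i _; rewrite ffunE.
  by case: pbP.
rewrite ex -addrA; apply: grpD => //.
  by apply: grp_sum => // i; apply: grpMz.
apply: grpD => //.
rewrite Hc' -sumrMnl; apply: grp_sum => // i.
by rewrite mulrzMn_swap; apply: grpMz.
Qed.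

Lemma has_index_of_cover n (T : finType) (L E : vset n) (c : T -> 'rV[rat]_n) :
  grp E -> (forall x, L (c x)) -> (forall v, L v -> exists x, E (v - c x)) ->
  exists k, (k <= #|T|)%N /\ has_index L E k.
Proof.
move=> gE Lc cov.
pose S := [set x : T | [forall y : T, pb (E (c x - c y)) ==> (enum_rank x <= enum_rank y)%N]].
exists #|S|; split; first exact: max_card.
exists (fun i => c (enum_val i)); split; first by move=> i.
split.
  move=> i j Eij.
  have := enum_valP i; have := enum_valP j; rewrite !inE => /forallP Hj /forallP Hi.
  have h1 := implyP (Hi (enum_val j)) (introT (pbP _) Eij).
  have h2 : (enum_rank (enum_val j) <= enum_rank (enum_val i))%N.
    apply: (implyP (Hj (enum_val i))); apply/pbP; rewrite -opprB; exact: grpN.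
  apply: enum_val_inj; apply: enum_rank_inj; apply: val_inj; apply/eqP.
  by rewrite eqn_leq h1 h2.
move=> v Lv; have [x Ex] := cov v Lv.
have Px : pb (E (c x - c x)) by apply/pbP; rewrite subrr; exact: grp0.
case: (@arg_minnP T x (fun z => pb (E (c z - c x))) (fun z => nat_of_ord (enum_rank z)) Px) => y /pbP Py miny.
have Sy : y \in S.
  rewrite inE; apply/forallP => z; apply/implyP => /pbP Eyz; apply: miny; apply/pbP.
  have -> : c z - c x = - (c y - c z) + (c y - c x) by rewrite opprB addrA subrK.
  by apply: grpD => //; apply: grpN.
exists (enum_rank_in Sy y); rewrite enum_rankK_in //.
have -> : v - c y = (v - c x) + - (c y - c x) by rewrite opprB addrA subrK.
by apply: grpD => //; apply: grpN.
Qed.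

Lemma idA (V : zmodType) (a a' b b' : V) : b' - b = (a - a') + - ((a + b) - (a' + b')).
Proof. rewrite opprB addrA [a - a' + _]addrA subrK opprD addrACA subrr add0r //. Qed.
Lemma idB (V : zmodType) (a a' b : V) : (a + b) - (a' + b) = a - a'.
Proof. by rewrite opprD addrACA subrr addr0. Qed.
Lemma idC (V : zmodType) (x y a b : V) : x - y = - (a - x) + (a - b) + (b - y).
Proof. by rewrite opprB [x - a + _]addrA subrK [x - b + _]addrA subrK. Qed.
Lemma idD (V : zmodType) (w ri rj z e : V) : ri - rj = z + e -> w - rj = z + (e + (w - ri)).
Proof. by move=> H; rewrite addrA -H addrC addrA subrK. Qed.

Lemma split_index n (L E K : vset n) k : grp L -> grp E -> grp K ->
  (forall v, E v -> L v) -> has_index L E k ->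
  exists k1 k2 (a : 'I_k1 -> 'rV[rat]_n) (b : 'I_k2 -> 'rV[rat]_n),
   (k1 * k2 <= k)%N /\ (forall al, L (a al) /\ K (a al)) /\
   (forall z, L z -> K z -> exists al, E (z - a al)) /\
   (forall be, L (b be)) /\
   (forall w, L w -> exists be z e, L z /\ K z /\ E e /\ w - b be = z + e).
Proof.
move=> gL gE gK EL [r [Lr [dr cr]]].
have [i0 _] := cr 0 (grp0 gL).
pose M v := exists z e, L z /\ K z /\ E e /\ v = z + e.
have gM : grp M.
  split; first by exists 0, 0; do 3!(split; first exact: grp0); rewrite addr0.
  move=> _ _ [z [e [Lz [Kz [Ee ->]]]]] [z' [e' [Lz' [Kz' [Ee' ->]]]]].
  exists (z - z'), (e - e'); do 3!(split; first exact: grpB).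
  by rewrite opprD addrACA.
pose PZ i z := L z /\ K z /\ E (z - r i).
pose S1 := [set i : 'I_k | pb (exists z, PZ i z)].
pose S2 := [set i : 'I_k | [forall j : 'I_k, (j < i)%N ==> ~~ pb (M (r i - r j))]].
pose a (al : 'I_#|S1|) := xpick 0 (PZ (enum_val al)).
have Ha : forall al, PZ (enum_val al) (a al).
  by move=> al; apply: xpickP; have := enum_valP al; rewrite inE => /pbP.
pose b (be : 'I_#|S2|) := r (enum_val be).
exists #|S1|, #|S2|, a, b; split; [|split; [|split; [|split]]].
- pose f (p : 'I_#|S1| * 'I_#|S2|) := xpick i0 (fun i => E (a p.1 + b p.2 - r i)).
  have Hf : forall p, E (a p.1 + b p.2 - r (f p)).
    move=> p; apply: (@xpickP _ i0 (fun i => E (a p.1 + b p.2 - r i))); apply: cr; apply: grpD => //; [by case: (Ha p.1) | exact: Lr].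
  have finj : injective f.
    move=> [al be] [al' be'] /= eqf.
    have Hd : E ((a al + b be) - (a al' + b be')).
      have := grpB gE (Hf (al, be)) (Hf (al', be')).
      by rewrite /= eqf opprB addrA subrK.
    have [La [Ka Ea]] := Ha al.
    have [La' [Ka' Ea']] := Ha al'.
    have Mb : M (b be' - b be).
      exists (a al - a al'), (- ((a al + b be) - (a al' + b be'))).
      split; first exact: grpB. split; first exact: grpB. split; first exact: grpN.
      exact: (@idA _ (a al) (a al') (b be) (b be')).
    have ebe : be = be'.
      have := enum_valP be; have := enum_valP be'; rewrite !inE => /forallP H' /forallP H.
      suff : enum_val be = enum_val be' :> 'I_k by move/enum_val_inj.
      apply: val_inj; apply/eqP; rewrite eqn_leq.
      apply/andP; split; rewrite leqNgt; apply/negP => lt.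
        have := implyP (H (enum_val be')) lt => /negP; apply; apply/pbP.
        by rewrite -opprB; apply: grpN.
      have := implyP (H' (enum_val be)) lt => /negP; apply; apply/pbP.
      exact: Mb.
    subst be'.
    have Ea0 : E (a al - a al') by move: Hd; rewrite (@idB _ (a al) (a al') (b be)).
    have : E (r (enum_val al) - r (enum_val al')).
      have -> : r (enum_val al) - r (enum_val al') =
        - (a al - r (enum_val al)) + (a al - a al') + (a al' - r (enum_val al')).
        exact: (@idC _ _ _ (a al) (a al')).
      by apply: grpD => //; apply: grpD => //; apply: grpN.
    by move/dr/enum_val_inj => ->.
  have := leq_card f finj; rewrite card_prod !card_ord => //.
- by move=> al; have [? [? _]] := Ha al.
- move=> z Lz Kz; have [i Ei] := cr z Lz.
  have Si : i \in S1 by rewrite inE; apply/pbP; exists z.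
  exists (enum_rank_in Si i).
  have := Ha (enum_rank_in Si i); rewrite enum_rankK_in // => [[_ [_ Ea]]].
  have -> : z - a (enum_rank_in Si i) = (z - r i) + - (a (enum_rank_in Si i) - r i).
    by rewrite opprB addrA subrK.
  by apply: grpD => //; apply: grpN.
- by move=> be; apply: Lr.
move=> w Lw; have [i Ei] := cr w Lw.
have Pi : pb (M (r i - r i)) by apply/pbP; rewrite subrr; exact: grp0.
case: (@arg_minnP _ i (fun j => pb (M (r i - r j))) (fun j => nat_of_ord j) Pi) => j /pbP Mj minj.
have Sj : j \in S2.
  rewrite inE; apply/forallP => j'; apply/implyP => lt; apply/negP => /pbP Mj'.
  have : (j <= j')%N.
    apply: minj; apply/pbP.
    have -> : r i - r j' = (r i - r j) + (r j - r j') by rewrite addrA subrK.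
    exact: grpD.
  by rewrite leqNgt lt.
exists (enum_rank_in Sj j).
have -> : b (enum_rank_in Sj j) = r j by rewrite /b enum_rankK_in.
case: Mj => z [e [Lz [Kz [Ee He]]]].
exists z, (e + (w - r i)); do 2!(split => //); split; first exact: grpD.
exact: (@idD _ w _ _ _ _ He).
Qed.

Lemma idE (V : zmodType) (x b z e a : V) (d : nat) :
  x + (b + (z + e)) *+ d - (a + b *+ d) = (x + z *+ d - a) + e *+ d.
Proof.
rewrite !mulrnDl; set B := b *+ d; set Z := z *+ d; set E := e *+ d.
rewrite (addrC a) opprD addrA addrCA [B + _]addrC addrK.
by rewrite addrA -addrA [E - a]addrC addrA.
Qed.

Lemma twostep n (A B : 'M[rat]_n) (K : vset n) k : grp K ->
  (forall v, K v -> K (v *m A)) -> (forall v, K (v *m B)) ->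
  (forall v, K v -> v *m B = 0) ->
  admissible_index A k -> exists k', (k' <= k)%N /\ admissible_index (A + B) k'.
Proof.
move=> gK KA KB KB0 [L [E [latL [latE [EL [EAL hidx]]]]]].
have gL := lattice_grp latL; have gE := lattice_grp latE.
have [d [dp Hd]] := lat_mult_map B latL latE.
have [k1 [k2 [a [b [kk [Ha [cova [Lb covb]]]]]]]] := split_index gL gE gK EL hidx.
pose L' := sand L K d; pose E' := sand E K d.
have gE' : grp E' := sand_grp d gE gK.
have [k' [k'le hk']] : exists k', (k' <= #|{: 'I_k1 * 'I_k2}|)%N /\ has_index L' E' k'.
  apply: (@has_index_of_cover _ _ L' E' (fun p => a p.1 + b p.2 *+ d)) => //.
    by move=> p; have [La Ka] := Ha p.1; apply: sand_in.
  move=> _ [x [w [Lx [Kx [Lw ->]]]]].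
  have [be [z [e [Lz [Kz [Ee Hw]]]]]] := covb w Lw.
  have Lxz : L (x + z *+ d) by apply: grpD => //; apply: grpMn.
  have Kxz : K (x + z *+ d) by apply: grpD => //; apply: grpMn.
  have [al Eal] := cova _ Lxz Kxz.
  exists (al, be) => /=.
  have -> : x + w *+ d - (a al + b be *+ d) = (x + z *+ d - a al) + e *+ d.
    have -> : w = b be + (z + e) by rewrite -Hw addrC subrK.
    exact: idE.
  by apply: sand_in => //; apply: grpB => //; have [_ Ka] := Ha al.
exists k'; split; first by rewrite card_prod !card_ord in k'le; exact: leq_trans k'le kk.
exists L', E'; split; first exact: sand_lattice.
split; first exact: sand_lattice.
split.
  by move=> _ [x [y [Ex [Kx [Ey ->]]]]]; apply: sand_in => //; apply: EL.
split; last exact: hk'.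
move=> _ [x [y [Ex [Kx [Ey ->]]]]].
have -> : (x + y *+ d) *m (A + B) = (x *m A + (y *m B) *+ d) + (y *m A) *+ d.
  rewrite mulmxDl !mulmxDr !mulmxMnl (KB0 _ Kx) addr0.
  by rewrite addrA addrAC.
apply: (@sand_in _ L K d (x *m A + (y *m B) *+ d) (y *m A)).
- by apply: grpD => //; [exact: EAL | exact: Hd].
- by apply: grpD => //; [exact: KA | apply: grpMn].
- exact: EAL.
Qed.

Section Flag.
Variable n : nat.
Variable N : 'M[rat]_n.
Definition Npow i := iter i (mulmx N) (1%:M : 'M[rat]_n).
Definition Kp i : vset n := fun v => v *m Npow i = 0.

Lemma Kp_grp i : grp (Kp i).
Proof.
split; first by rewrite /Kp mul0mx.
by move=> x y Hx Hy; rewrite /Kp mulmxBl Hx Hy subrr.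
Qed.

Lemma NpowSr i : Npow i.+1 = Npow i *m N.
Proof.
elim: i => [|i IH]; first by rewrite /Npow /= mulmx1 mul1mx.
by rewrite (_ : Npow i.+2 = N *m Npow i.+1) // {1}IH mulmxA.
Qed.

Lemma Kp_S i v : Kp i v -> Kp i.+1 v.
Proof. by rewrite /Kp NpowSr mulmxA => ->; rewrite mul0mx. Qed.

Lemma Kp_le i j v : (i <= j)%N -> Kp i v -> Kp j v.
Proof.
move=> /subnK <-; elim: (j - i)%N => [|m IH] // Hv.
by rewrite addSn; apply: Kp_S; apply: IH.
Qed.

Definition Qp i := let U := kermx (Npow i) in proj_mx U (U^C)%MS.

Lemma Qp_in i v : Kp i (v *m Qp i).
Proof. by apply/eqP; rewrite -sub_kermx proj_mx_sub. Qed.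

Lemma Qp_id i v : Kp i v -> v *m Qp i = v.
Proof. by move=> Hv; apply: proj_mx_id; [exact: capmx_compl | rewrite sub_kermx Hv]. Qed.

Lemma comm_Npow X : X *m N = N *m X -> forall i, X *m Npow i = Npow i *m X.
Proof.
move=> HX; elim=> [|i IH]; first by rewrite /Npow /= mulmx1 mul1mx.
by rewrite (_ : Npow i.+1 = N *m Npow i) // mulmxA HX -mulmxA IH mulmxA.
Qed.

Lemma comm_Kp X : X *m N = N *m X -> forall i v, Kp i v -> Kp i (v *m X).
Proof. by move=> HX i v Hv; rewrite /Kp -mulmxA comm_Npow // mulmxA Hv mul0mx. Qed.

Lemma mx_ext (X Y : 'M[rat]_n) : (forall v : 'rV_n, v *m X = v *m Y) -> X = Y.
Proof. by move=> H; apply/row_matrixP => i; rewrite -[X]mul1mx -[Y]mul1mx !row_mul. Qed.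

Lemma flag_le (A B : 'M[rat]_n) m : Npow m = 0 ->
  (forall i v, Kp i v -> Kp i (v *m A)) -> (forall i v, Kp i.+1 v -> Kp i (v *m B)) ->
  forall k, admissible_index A k -> exists k', (k' <= k)%N /\ admissible_index (A + B) k'.
Proof.
move=> Nm KA KB.
pose Aj j := A + (Qp j - Qp 0) *m B.
have Q0 : forall v : 'rV[rat]_n, v *m Qp 0 = 0.
  by move=> v; have := Qp_in 0 v; rewrite /Kp /Npow /= mulmx1.
have KjS : forall j (v : 'rV[rat]_n), Kp j v -> Kp j (v *m B) by move=> j v /Kp_S /KB.
suff H : forall j k, admissible_index A k -> exists k', (k' <= k)%N /\ admissible_index (Aj j) k'.
  have -> : A + B = Aj m.
    rewrite /Aj; congr (_ + _); rewrite -[LHS]mul1mx; congr (_ *m _).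
    apply: mx_ext => v; rewrite mulmx1 mulmxBr Q0 subr0 Qp_id //.
    by rewrite /Kp Nm mulmx0.
  exact: H.
elim=> [|j IH] k Hk.
  by exists k; split => //; rewrite /Aj subrr mul0mx addr0.
have [k1 [k1le Hk1]] := IH k Hk.
have -> : Aj j.+1 = Aj j + (Qp j.+1 - Qp j) *m B.
  rewrite /Aj -addrA -mulmxDl; congr (_ + _ *m _).
  by rewrite [RHS]addrC addrA subrK.
have gK := Kp_grp j.
suff [k' [k'le Hk']] : exists k', (k' <= k1)%N /\
    admissible_index (Aj j + (Qp j.+1 - Qp j) *m B) k'.
  by exists k'; split => //; exact: leq_trans k'le k1le.
apply: (@twostep n (Aj j) ((Qp j.+1 - Qp j) *m B) (Kp j) k1 gK); last exact: Hk1.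
- move=> v Hv; rewrite /Aj mulmxDr; apply: grpD => //; first exact: KA.
  rewrite mulmxA mulmxBr; apply: KjS; apply: grpB => //; first exact: Qp_in.
  by apply: (@Kp_le 0); [| exact: Qp_in].
- move=> v; rewrite mulmxA mulmxBr; apply: KB; apply: grpB; first exact: Kp_grp.
    exact: Qp_in.
  by apply: Kp_S; exact: Qp_in.
- move=> v Hv; rewrite mulmxA mulmxBr Qp_id ?Qp_id ?subrr ?mul0mx //.
  exact: Kp_S.
Qed.
End Flag.

Lemma le_trans_adm n (X Y : 'M[rat]_n) :
  (forall k, admissible_index X k -> exists k', (k' <= k)%N /\ admissible_index Y k') ->
  (forall k, admissible_index Y k -> exists k', (k' <= k)%N /\ admissible_index X k') ->
  forall k, is_ht X k -> is_ht Y k.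
Proof.
move=> XY YX k [Hk Hmin].
have [k' [k'le Hk']] := XY k Hk.
have [k'' [k''le Hk'']] := YX k' Hk'.
have kk : k' = k by apply/eqP; rewrite eqn_leq k'le (leq_trans (Hmin _ Hk'') k''le).
subst k'; split => // k2 H2.
have [k3 [k3le Hk3]] := YX k2 H2.
exact: leq_trans (Hmin _ Hk3) k3le.
Qed.

Unset Implicit Arguments.

Theorem lemma13 (n : nat) (h hs hu : 'M[rat]_n) :
  h \in unitmx ->
  semisimple hs -> unipotent hu ->
  h = hs *m hu -> hs *m hu = hu *m hs ->
  forall k : nat, is_ht h k <-> is_ht hs k.
Proof.
move=> _ _ [m Hm] eh comm.
pose N := hu - 1%:M.
have Nm : Npow N m = 0 by [].
have sN : hs *m N = N *m hs by rewrite /N mulmxBr mulmxBl mulmx1 mul1mx comm.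
have uN : hu *m N = N *m hu by rewrite /N mulmxBr mulmxBl mulmx1 mul1mx.
have hN : h *m N = N *m h by rewrite eh -mulmxA uN mulmxA sN mulmxA.
have eh2 : h = hs + hs *m N by rewrite eh /N mulmxBr mulmx1 addrC subrK.
have KB : forall i v, Kp N i.+1 v -> Kp N i (v *m (hs *m N)).
  move=> i v Hv; rewrite /Kp -!mulmxA (_ : N *m Npow N i = Npow N i.+1) //.
  by rewrite (comm_Npow sN) mulmxA Hv mul0mx.
have KBN : forall i v, Kp N i.+1 v -> Kp N i (v *m - (hs *m N)).
  by move=> i v Hv; rewrite mulmxN; apply: grpN; [exact: Kp_grp | exact: KB].
have le1 := flag_le Nm (comm_Kp sN) KB.
have le2 := flag_le Nm (comm_Kp hN) KBN.
rewrite -eh2 in le1.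
have e3 : h + - (hs *m N) = hs by rewrite eh2 addrK.
rewrite e3 in le2.
move=> k; split; apply: le_trans_adm => //.
Qed.
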